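(* Let $n$, $k$, $t$, $s$ be positive integers with $k\geq t+1$ and $n\geq 2k$, and let $V$ be an $n$-dimensional vector space over $\mathbb{F}_q$. Suppose $\mathcal{F}\subseteq{V\brack k}$ is almost $t$-intersecting and $S\in{V\brack s}$. If there exists $F\in\mathcal{F}$ with $\dim(F\cap S)=m<t$, then there is $R\in{V\brack s+t-m}$ with $S\subseteq R$ such that $$|\mathcal{F}_S|\leq{k-t+1\brack 1}^{t-m}|\mathcal{F}_R|+1.$$
   Context: $q$ is a prime power; ${W\brack k}$ is the set of $k$-dimensional subspaces of $W$ and ${m\brack r}$ the Gaussian binomial coefficient $\prod_{i=0}^{r-1}\frac{q^{m-i}-1}{q^{r-i}-1}$. A family $\mathcal{F}\subseteq{V\brack k}$ is almost $t$-intersecting if for each $F\in\mathcal{F}$ there is at most one $F'\in\mathcal{F}$ with $\dim(F\cap F')<t$. For a subspace $A$ of $V$, $\mathcal{F}_A=\{F\in\mathcal{F}: A\subseteq F\}$. *)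

(* Defs.v *)
From mathcomp Require Import all_boot all_algebra all_field.
From mathcomp Require Export finmap.
Set Implicit Arguments. Unset Strict Implicit. Unset Printing Implicit Defensive.
Open Scope fset_scope.

(* Gaussian binomial coefficient [m brack r]_q
   = prod_{i<r} (q^(m-i) - 1) / (q^(r-i) - 1); the quotient of the two
   products is an exact natural-number division. *)
Definition qbinom (q m r : nat) : nat :=
  (\prod_(i < r) (q ^ (m - i) - 1)) %/ (\prod_(i < r) (q ^ (r - i) - 1)).

Definition subfam (K : fieldType) (vT : vectType K)
  (Fam : {fset {vspace vT}}) (A : {vspace vT}) : {fset {vspace vT}} :=
  [fset X in Fam | (A <= X)%VS].

Definition almost_t_intersecting (K : fieldType) (vT : vectType K)
  (Fam : {fset {vspace vT}}) (t : nat) : Prop :=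
  forall A, A \in Fam -> #|` [fset B in Fam | \dim (A :&: B) < t] | <= 1.

(* Main.v *)
Require Import Defs.
From mathcomp Require Import all_boot all_algebra all_field.
From mathcomp Require Import finmap zify.
Set Implicit Arguments. Unset Strict Implicit. Unset Printing Implicit Defensive.
Open Scope fset_scope.
Import GRing.Theory.

Lemma card_sep (Y : choiceType) (A : {fset Y}) (P : pred Y) :
  #|` [fset y in A | P y]| = count P A.
Proof.
rewrite -size_filter; apply: perm_size; apply: uniq_perm.
- exact: fset_uniq.
- by rewrite filter_uniq // fset_uniq.
- by move=> y; rewrite mem_filter !inE andbC.
Qed.

Section V.
Variables (K : fieldType) (vT : vectType K).
Local Open Scope ring_scope.

Lemma dim_add_line (U : {vspace vT}) v : v \notin U -> \dim (U + <[v]>)%VS = (\dim U).+1.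
Proof.
move=> vU.
have v0 : v != 0 by apply: contraNneq vU => ->; rewrite mem0v.
have := dimv_sum_cap U <[v]>; rewrite dim_vline v0.
suff -> : \dim (U :&: <[v]>)%VS = 0%N by rewrite addn0 addn1.
apply/eqP; rewrite dimv_eq0; apply/eqP/vspaceP => w; rewrite memv_cap memv0.
apply/andP/eqP => [[wU /vlineP [c wE]] | ->]; last by rewrite !mem0v.
rewrite wE in wU *.
case: (c =P 0) => [->|/eqP c0]; first by rewrite scale0r.
have := memvZ c^-1 wU; rewrite scalerA mulVf // scale1r => vU'.
by rewrite vU' in vU.
Qed.

Lemma exists_subdim (U : {vspace vT}) j : (j <= \dim U)%N ->
  exists2 W : {vspace vT}, (W <= U)%VS & \dim W = j.
Proof.
elim: j => [|j IH] hj; first by exists 0%VS; rewrite ?sub0v ?dimv0.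
have [W WU dW] := IH (ltnW hj).
have : ~~ (U <= W)%VS.
  by apply: contraTN hj => /dimvS; rewrite -dW -ltnNge ltnS.
case/subvPn => u uU uW.
exists (W + <[u]>)%VS; last by rewrite dim_add_line // dW.
by rewrite subv_add WU -memvE.
Qed.
End V.

Lemma count_sum (Y : eqType) (s : seq Y) (P : pred Y) :
  count P s = \sum_(x <- s) P x.
Proof. by elim: s => [|x s IH]; rewrite ?big_nil ?big_cons //= IH. Qed.

Lemma sum_le_max (I : finType) (A : {set I}) (f : I -> nat) : A != set0 ->
  exists2 x, x \in A & \sum_(y in A) f y <= #|A| * f x.
Proof.
case/set0Pn => x0 x0A.
case: (arg_maxnP f x0A) => x xA xmax.
exists x => //; rewrite -sum_nat_const; apply: leq_sum => y yA; exact: xmax.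
Qed.

Section Step.
Variables (K : finFieldType) (vT : vectType K).
Local Notation fT := (finvect_type vT).

Lemma step (F0 : {vspace vT}) (Good : {fset {vspace vT}}) k t (T : {vspace vT}) :
  \dim F0 = k -> (t <= k)%N -> (forall G, G \in Good -> t <= \dim (F0 :&: G)%VS) ->
  \dim (T :&: F0)%VS < t ->
  exists T' : {vspace vT}, [/\ (T <= T')%VS, \dim T' = (\dim T).+1,
     \dim (T' :&: F0)%VS = (\dim (T :&: F0)%VS).+1 &
     #|` subfam Good T| <= qbinom #|K| (k - t + 1) 1 * #|` subfam Good T'|].
Proof.
move=> dF0 tk hGood dD.
set D := (T :&: F0)%VS; set d := \dim D.
set C := (F0 :\: D)%VS.
have DF0 : (D <= F0)%VS by rewrite capvSr.
have dC : \dim C = k - d.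
  by have := dimv_cap_compl F0 D; rewrite (capv_idPr DF0) dF0 => <-; rewrite addKn.
set a := (k - t + 1)%N.
have [W WC dW] : exists2 W : {vspace vT}, (W <= C)%VS & \dim W = a.
  apply: exists_subdim; rewrite dC /a; move: dD tk; rewrite -/D -/d; clear; move=> *; lia.
have WF0 : (W <= F0)%VS by apply: subv_trans WC (diffvSl _ _).
have WT : forall x, x \in W -> x \in T -> x = 0%R.
  move=> x xW xT; apply/eqP; rewrite -memv0 -(capv_diff F0 D) memv_cap.
  by rewrite (subvP WC) //= memv_cap xT (subvP WF0).
pose Wset : {set fT} := [set x : fT | (x \in W) && (x != 0%R)].
have q1 := card_finNzRing_gt1 K.
have cardW : #|Wset| = (#|K| ^ a).-1.
  have cardWall : #|[set x : fT | x \in W]| = #|K| ^ a.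
    rewrite -dW; set n := \dim W.
    pose V2rV (v : vT) := (\row_(i < n) coord (vbasis W) i v)%R.
    pose rV2V (rv : 'rV[K]_n) : fT := (\sum_i rv 0 i *: (vbasis W)`_i)%R.
    have rV2V_K: cancel rV2V V2rV.
      have freeV: free (vbasis W) := basis_free (vbasisP W).
      by move=> rv; apply/rowP=> i; rewrite mxE coord_sum_free.
    rewrite -[n]mul1n -card_mx -(card_imset _ (can_inj rV2V_K)).
    apply: eq_card => v; rewrite inE; apply/idP/imsetP=> [/coord_vbasis-> | [rv _ ->]].
      by exists (V2rV v) => //; apply: eq_bigr => i _; rewrite mxE.
    by apply: (@rpred_sum vT) => i _; rewrite rpredZ ?vbasis_mem ?memt_nth.
  have z : (0%R : fT) \in W := mem0v W.
  rewrite (cardsD1 0%R) inE z add1n in cardWall.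
  by rewrite -cardWall /=; apply: eq_card => y; rewrite !inE andbC.
have hG : forall G, G \in subfam Good T -> #|K|.-1 <= #|[set x in Wset | x \in G]|.
  move=> G; rewrite /subfam !inE => /andP [GG TG].
  set H := ((F0 :&: G) :&: W)%VS.
  have dH : 0 < \dim H.
    have := dimv_sum_cap (F0 :&: G) W.
    have : \dim (F0 :&: G + W)%VS <= k.
      by rewrite -dF0; apply: dimvS; rewrite subv_add capvSl WF0.
    have := hGood G GG; rewrite dW /a -/H.
    move: tk; clear; move=> *; lia.
  have H0 : vpick H != 0%R by rewrite vpick0 -dimv_eq0 -lt0n.
  have := memv_pick H; rewrite !memv_cap => /andP [/andP [_ w0G] w0W].
  pose w0 : fT := vpick H.
  pose f := fun c : K => ((c *: w0)%R : fT).
  have finj : {in [set~ 0%R] &, injective f}.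
    move=> c c' _ _ /eqP; rewrite /f -subr_eq0 -scalerBl scaler_eq0 (negbTE H0) orbF subr_eq0.
    by move/eqP.
  rewrite -(cardsC1 (0%R : K)) -(card_in_imset finj); apply: subset_leq_card.
  apply/subsetP => yy /imsetP [c]; rewrite !inE => c0 ->.
  have H0' : w0 != 0%R := H0.
  rewrite /f scaler_eq0 negb_or c0 H0' /= andbT; apply/andP; split; [exact: (memvZ c w0W) | exact: (memvZ c w0G)].
have dc : \sum_(G <- subfam Good T) #|[set x in Wset | x \in G]| =
          \sum_(x in Wset) #|` subfam Good (T + <[x : vT]>)%VS|.
  have e1 : forall G : {vspace vT}, #|[set x in Wset | x \in G]| = \sum_(x in Wset) ((x : vT) \in G : nat).
    move=> G; rewrite -sum1_card (eq_bigl (fun x => (x \in Wset) && ((x : vT) \in G))); last first.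
      by move=> y; rewrite !inE.
    by rewrite big_mkcondr /=; apply: eq_bigr => y _; case: ((y : vT) \in G).
  rewrite (eq_bigr _ (fun G _ => e1 G)) exchange_big /=; apply: eq_bigr => x _.
  have -> : subfam Good (T + <[x : vT]>)%VS = [fset G in subfam Good T | (x : vT) \in G].
    apply/fsetP => G; rewrite /subfam !inE subv_add -memvE.
    by rewrite andbA.
  by rewrite card_sep count_sum.
have Wne : Wset != set0.
  by rewrite -card_gt0 cardW -subn1 subn_gt0 -{1}(expn0 #|K|) ltn_exp2l // /a addn1.
have [x xW hx] := sum_le_max (fun x : fT => #|` subfam Good (T + <[x : vT]>)%VS|) Wne.
have xT : (x : vT) \notin T.
  move: xW; rewrite inE => /andP [xW x0]; apply/negP => xT.
  by move: x0; rewrite (WT _ xW xT) eqxx.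
exists (T + <[x : vT]>)%VS; split.
- exact: addvSl.
- exact: dim_add_line.
- have xF0 : (x : vT) \in F0.
    by move: xW; rewrite inE => /andP [xW _]; apply: (subvP WF0).
  have e : (T + <[x : vT]> + F0 = T + F0)%VS.
    rewrite -addvA; congr (_ + _)%VS; apply/addv_idPr; by rewrite -memvE.
  have h1 := dimv_sum_cap (T + <[x : vT]>) F0.
  have h2 := dimv_sum_cap T F0.
  rewrite e dim_add_line // in h1.
  rewrite -/D -/d; move: h1 h2; rewrite -/D -/d; clear; move=> *; lia.
- have Hq : (#|K| ^ a).-1 = #|K|.-1 * \sum_(i < a) #|K| ^ i := predn_exp _ _.
  have q0 : 0 < #|K|.-1 by rewrite -subn1 subn_gt0.
  have qb : qbinom #|K| (k - t + 1) 1 = \sum_(i < a) #|K| ^ i.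
    by rewrite /qbinom !big_ord1 /= !subn0 expn1 !subn1 -/a Hq mulKn.
  rewrite qb -(@leq_pmul2l #|K|.-1) //.
  apply: (@leq_trans (\sum_(G <- subfam Good T) #|[set x in Wset | x \in G]|)).
    rewrite card_fset_sum1 big_distrr /= big_seq [leqRHS]big_seq.
    by apply: leq_sum => G GT; rewrite muln1; apply: hG.
  by rewrite dc; apply: leq_trans hx _; rewrite cardW Hq mulnA.
Qed.
End Step.

Section Iter.
Variables (K : finFieldType) (vT : vectType K).

Lemma iter_step (F0 : {vspace vT}) (Good : {fset {vspace vT}}) k t :
  \dim F0 = k -> (t <= k)%N -> (forall G, G \in Good -> t <= \dim (F0 :&: G)%VS) ->
  forall i (T : {vspace vT}), \dim (T :&: F0)%VS + i <= t ->
  exists T' : {vspace vT}, [/\ (T <= T')%VS, \dim T' = (\dim T + i)%N,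
     \dim (T' :&: F0)%VS = (\dim (T :&: F0)%VS + i)%N &
     #|` subfam Good T| <= (qbinom #|K| (k - t + 1) 1) ^ i * #|` subfam Good T'|].
Proof.
move=> dF0 tk hG; elim=> [|i IH] T hT.
  by exists T; rewrite !addn0 expn0 mul1n subvv.
have hlt : \dim (T :&: F0)%VS < t by lia.
have [T1 [TT1 dT1 dT1F h1]] := step dF0 tk hG hlt.
have hle : \dim (T1 :&: F0)%VS + i <= t by rewrite dT1F; lia.
have [T2 [T1T2 dT2 dT2F h2]] := IH T1 hle.
exists T2; split.
- exact: subv_trans TT1 T1T2.
- by rewrite dT2 dT1 addSnnS.
- by rewrite dT2F dT1F addSnnS.
- apply: leq_trans h1 _; rewrite expnS -mulnA leq_mul2l h2 orbT //.
Qed.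
End Iter.

Unset Implicit Arguments.
Set Strict Implicit.

Theorem lemma3p2 (K : finFieldType) (vT : vectType K) (n k t s : nat)
  (Fam : {fset {vspace vT}}) (S : {vspace vT}) (m : nat) :
  0 < n -> 0 < k -> 0 < t -> 0 < s ->
  t + 1 <= k -> 2 * k <= n ->
  \dim (fullv : {vspace vT}) = n ->
  (forall X, X \in Fam -> \dim X = k) ->
  almost_t_intersecting Fam t ->
  \dim S = s ->
  (exists2 X, X \in Fam & \dim (X :&: S) = m) ->
  m < t ->
  exists R : {vspace vT},
    [/\ \dim R = s + t - m, (S <= R)%VS &
        #|` subfam Fam S| <= (qbinom #|K| (k - t + 1) 1) ^ (t - m) * #|` subfam Fam R| + 1].
Proof.
move=> n0 k0 t0 s0 tk kn dn dFam almost dS [X XF dXS] mt.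
pose Good := [fset G in Fam | t <= \dim (X :&: G)%VS].
have hG : forall G, G \in Good -> t <= \dim (X :&: G)%VS.
  by move=> G; rewrite !inE => /andP [].
have dX := dFam X XF.
have tk' : t <= k by lia.
have hle : \dim (S :&: X)%VS + (t - m) <= t by rewrite capvC dXS; lia.
have [R [SR dR _ hR]] := iter_step dX tk' hG hle.
exists R; split => //.
  by rewrite dR dS; lia.
have hB := almost X XF.
have e1 : #|` subfam Fam S| <= #|` subfam Good S| + 1.
  apply: leq_trans (_ : #|` subfam Good S `|` [fset B in Fam | \dim (X :&: B)%VS < t]| <= _).
    apply: fsubset_leq_card; apply/fsubsetP => G; rewrite /subfam in_fsetU !inE.
    case/andP => GF SG; rewrite GF SG /=; case: ltnP => //.
  apply: leq_trans (leq_card_fsetU _ _) _; exact: leq_add.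
apply: leq_trans e1 _; rewrite leq_add2r; apply: leq_trans hR _.
rewrite leq_mul2l; apply/orP; right; apply: fsubset_leq_card.
apply/fsubsetP => G; rewrite /subfam !inE => /andP [/andP [-> _] ->] //.
Qed.
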